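(* Let $f_0,f_1\in \mathrm{PL}_0(\mathbf{I})$ satisfy $[f_1^{f_0},f_0f_1^{-1}]=1$ and $[f_0f_1^{-1},f_1^{f_0^2}]=1$. If $A$ is an orbital of $f_0$, then either there exists an orbital $B$ of $f_1$ with $B\subseteq A$, or $A$ is disjoint from $\operatorname{Supp}(f_1)$.
   Context: $\mathrm{PL}_0(\mathbf{I})$ is the group of orientation-preserving piecewise-linear homeomorphisms of $[0,1]$ with finitely many points of non-differentiability. Functions act on the right: $tf=f(t)$, $fg=g\circ f$, $a^b=b^{-1}ab$, $[a,b]=aba^{-1}b^{-1}$. The orbitals of $f$ are the connected components (open intervals) of $\operatorname{Supp}(f)=\{x: xf\ne x\}$. *)

(* Defs.v *)
From Stdlib Require Import Reals.
Open Scope R_scope.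

Definition inI (t : R) : Prop := 0 <= t <= 1.

(* PL_0(I): orientation-preserving PL homeomorphisms of [0,1] with finitely
   many breakpoints.  A function R -> R represents such an element; only its
   values on [0,1] matter.  f fixes 0 and 1, is strictly increasing on [0,1],
   and [0,1] is cut by finitely many points 0 = x_0 < ... < x_n = 1 such that
   f is affine on each closed piece [x_i, x_{i+1}] (hence continuous). *)
Definition PL0 (f : R -> R) : Prop :=
  f 0 = 0 /\ f 1 = 1 /\
  (forall s t, inI s -> inI t -> s < t -> f s < f t) /\
  exists (n : nat) (x : nat -> R),
    x O = 0 /\ x n = 1 /\
    (forall i, (i < n)%nat -> x i < x (S i)) /\
    (forall i, (i < n)%nat -> exists m c : R,
        forall t, x i <= t <= x (S i) -> f t = m * t + c).

Definition is_inv (f g : R -> R) : Prop :=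
  PL0 g /\ forall t, inI t -> g (f t) = t /\ f (g t) = t.

(* Right actions: t (f g) = g (f t). *)
Definition mul (f g : R -> R) : R -> R := fun t => g (f t).

(* a^b = b^{-1} a b, given binv = b^{-1}. *)
Definition conjg (a b binv : R -> R) : R -> R := mul (mul binv a) b.

(* [a,b] = a b a^{-1} b^{-1}, given ainv = a^{-1}, binv = b^{-1}. *)
Definition comm (a ainv b binv : R -> R) : R -> R :=
  mul (mul (mul a b) ainv) binv.

Definition is_id (h : R -> R) : Prop := forall t, inI t -> h t = t.

Definition Supp (f : R -> R) (x : R) : Prop := inI x /\ f x <> x.

(* Connected subsets of R are exactly the intervals. *)
Definition is_interval (A : R -> Prop) : Prop :=
  forall x y z, A x -> A y -> x <= z <= y -> A z.

(* An orbital of f: a connected component of Supp(f), i.e. a nonempty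
   connected subset of Supp(f) containing every connected subset of Supp(f)
   that meets it. *)
Definition orbital (f : R -> R) (A : R -> Prop) : Prop :=
  (exists x, A x) /\
  (forall x, A x -> Supp f x) /\
  is_interval A /\
  (forall B : R -> Prop, is_interval B -> (forall x, B x -> Supp f x) ->
     (exists x, B x /\ A x) -> forall x, B x -> A x).

(* Main.v *)
Require Import Defs.
From Stdlib Require Import Reals Lra Lia Classical.
Open Scope R_scope.

Definition Mono (f : R -> R) := forall s t, inI s -> inI t -> s < t -> f s < f t.
Definition MapsI (f : R -> R) := forall t, inI t -> inI (f t).
Definition Bij (f fi : R -> R) := Mono f /\ Mono fi /\ MapsI f /\ MapsI fi /\
  (forall t, inI t -> fi (f t) = t /\ f (fi t) = t).
Definition LA (f : R -> R) := forall q, 0 < q <= 1 -> exists d m c, 0 < d <= q /\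
  forall t, q - d <= t <= q -> f t = m * t + c.
Definition Comp (f : R -> R) (e y : R) := forall z, (e <= z <= y \/ y <= z <= e) -> Supp f z.

Lemma PL0_Mono f : PL0 f -> Mono f.
Proof. intros (_&_&H&_). exact H. Qed.

Lemma PL0_MapsI f : PL0 f -> MapsI f.
Proof.
  intros (H0&H1&H&_) t [Ht0 Ht1]. unfold inI.
  destruct (Req_dec t 0) as [->|n0]; [rewrite H0; lra|].
  destruct (Req_dec t 1) as [->|n1]; [rewrite H1; lra|].
  assert (f 0 < f t) by (apply H; unfold inI; lra).
  assert (f t < f 1) by (apply H; unfold inI; lra). lra.
Qed.

Lemma breakpt (x : nat -> R) n q : x O = 0 -> (forall i, (i < n)%nat -> x i < x (S i)) ->
  0 < q -> forall k, (k <= n)%nat -> q <= x k -> exists i, (i < k)%nat /\ x i < q <= x (S i).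
Proof.
  intros X0 Xi Hq k. induction k as [|k IH]; intros Hk Hqk.
  - rewrite X0 in Hqk; lra.
  - destruct (Rle_dec q (x k)) as [h|h].
    + destruct (IH ltac:(lia) h) as [i [Hi Hi2]]. exists i; split; [lia|auto].
    + exists k; split; [lia|lra].
Qed.

Lemma bp_nonneg (x : nat -> R) n : x O = 0 -> (forall i, (i < n)%nat -> x i < x (S i)) ->
  forall i, (i <= n)%nat -> 0 <= x i.
Proof.
  intros X0 Xi i. induction i as [|i IH]; intros Hi; [lra|].
  assert (x i < x (S i)) by (apply Xi; lia). specialize (IH ltac:(lia)). lra.
Qed.

Lemma PL0_LA f : PL0 f -> LA f.
Proof.
  intros (_&_&_&n&x&X0&Xn&Xi&Xa) q Hq.
  destruct (breakpt x n q X0 Xi ltac:(lra) n (le_n n) ltac:(lra)) as [i [Hi [H1 H2]]].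
  destruct (Xa i Hi) as [m [c Hmc]].
  assert (0 <= x i) by (apply (bp_nonneg x n); auto; lia).
  exists (q - x i), m, c. split; [lra|]. intros t Ht. apply Hmc. lra.
Qed.

Lemma PL0_Bij f g : PL0 f -> is_inv f g -> Bij f g.
Proof.
  intros Hf [Hg Hi]. repeat split; try apply PL0_Mono; try apply PL0_MapsI; auto;
  apply Hi; auto.
Qed.

Lemma Mono_le f s t : Mono f -> inI s -> inI t -> s <= t -> f s <= f t.
Proof. intros M Hs Ht H. destruct (Req_dec s t) as [->|]; [lra|]. left; apply M; auto; lra. Qed.

Lemma Mono_inj f s t : Mono f -> inI s -> inI t -> f s = f t -> s = t.
Proof.
  intros M Hs Ht H. destruct (total_order_T s t) as [[h|h]|h]; auto.
  - specialize (M s t Hs Ht h); lra.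
  - specialize (M t s Ht Hs h); lra.
Qed.

Lemma Bij_comp f fi g gi : Bij f fi -> Bij g gi ->
  Bij (fun t => g (f t)) (fun t => fi (gi t)).
Proof.
  intros (Mf&Mfi&If&Ifi&Inf) (Mg&Mgi&Ig&Igi&Ing). split; [|split; [|split; [|split]]].
  - intros s u Hs Hu H. apply Mg; auto.
  - intros s u Hs Hu H. apply Mfi; auto.
  - intros u Hu. auto.
  - intros u Hu. auto.
  - intros u Hu. split.
    + destruct (Ing (f u) (If u Hu)) as [-> _]. apply Inf; auto.
    + destruct (Inf (gi u) (Igi u Hu)) as [_ ->]. apply Ing; auto.
Qed.

Lemma Bij_sym f fi : Bij f fi -> Bij fi f.
Proof. intros (a&b&c&d&e). split; [|split; [|split; [|split]]]; auto.
  intros u Hu; split; apply e; auto. Qed.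

Lemma LA_comp f g : Mono f -> MapsI f -> LA f -> LA g -> LA (fun t => g (f t)).
Proof.
  intros M I Lf Lg q Hq.
  destruct (Lf q Hq) as [d1 [m1 [c1 [Hd1 E1]]]].
  assert (Iq : inI q) by (unfold inI; lra).
  assert (I0 : inI 0) by (unfold inI; lra).
  assert (A1 : f 0 < f q) by (apply M; auto; lra).
  assert (A2 : inI (f 0)) by auto. assert (A3 : inI (f q)) by auto.
  destruct (Lg (f q) ltac:(unfold inI in *; lra)) as [d2 [m2 [c2 [Hd2 E2]]]].
  assert (A4 : f (q - d1) < f q) by (apply M; unfold inI; lra).
  rewrite (E1 (q - d1)) in A4 by lra. rewrite (E1 q) in A4 by lra.
  assert (m1pos : 0 < m1) by nra.
  assert (A5 : 0 < d2 / m1) by (apply Rdiv_lt_0_compat; lra).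
  exists (Rmin d1 (d2 / m1)), (m2 * m1), (m2 * c1 + c2).
  pose proof (Rmin_l d1 (d2/m1)) as R1. pose proof (Rmin_r d1 (d2/m1)) as R2.
  split. { split; [apply Rmin_glb_lt; lra| ]. lra. }
  intros t Ht.
  rewrite (E1 t) by lra.
  assert (A6 : m1 * (q - t) <= d2).
  { assert (A7 : q - t <= d2 / m1) by lra.
    apply Rmult_le_compat_l with (r := m1) in A7; [|lra].
    unfold Rdiv in A7. rewrite <- Rmult_assoc, (Rmult_comm m1 d2), Rmult_assoc, Rinv_r in A7; lra. }
  rewrite E2.
  - ring.
  - rewrite (E1 q) by lra. nra.
Qed.

Lemma Comp_between f e y t : Comp f e y -> (e <= t <= y \/ y <= t <= e) -> Comp f e t.
Proof. intros C Ht z Hz. apply C. lra. Qed.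
Lemma Comp_self f e : Supp f e -> Comp f e e.
Proof. intros S z Hz. replace z with e by lra. auto. Qed.
Lemma Comp_Supp f e y : Comp f e y -> Supp f y.
Proof. intros C. apply C. lra. Qed.
Lemma Comp_I f e y : Comp f e y -> inI y.
Proof. intros C. apply (Comp_Supp f e y C). Qed.
Lemma Comp_sym f e y : Comp f e y -> Comp f y e.
Proof. intros C z Hz. apply C. lra. Qed.

Lemma Comp_inv k ki e t : Bij k ki -> Comp k e t -> Comp ki e t.
Proof.
  intros (Mk&Mki&Ik&Iki&Inv) C z Hz. destruct (C z Hz) as [Iz Nz]. split; auto.
  intro E. apply Nz. rewrite <- E at 1. apply Inv; auto.
Qed.

Lemma Comp_k k ki e t : Bij k ki -> Comp k e t -> Comp k e (k t).
Proof.
  intros B C. pose proof B as (Mk&Mki&Ik&Iki&Inv).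
  pose proof (Comp_Supp _ _ _ C) as [It Nt].
  pose proof (C e ltac:(lra)) as [Ie Ne].
  assert (Ikt : inI (k t)) by auto.
  intros z Hz. assert (Iz : inI z) by (unfold inI in *; lra).
  split; auto. intro Ez.
  destruct (classic (e <= z <= t \/ t <= z <= e)) as [h|h].
  { destruct (C z h); auto. }
  destruct (total_order_T z (k t)) as [[h1|h1]|h1].
  - assert (t < z) by lra. specialize (Mk t z It Iz H). lra.
  - subst z. apply Nt. apply (Mono_inj k); auto.
  - assert (z < t) by lra. specialize (Mk z t Iz It H). lra.
Qed.

Lemma Comp_ki k ki e t : Bij k ki -> Comp k e t -> Comp k e (ki t).
Proof.
  intros B C. pose proof (Bij_sym _ _ B) as B'.
  pose proof (Comp_k ki k e t B' (Comp_inv k ki e t B C)) as C2.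
  apply (Comp_inv ki k); auto.
Qed.

Fixpoint iter (k : R -> R) (n : nat) (t : R) : R :=
  match n with O => t | S n => k (iter k n t) end.

Lemma iter_add k n m t : iter k (n + m) t = iter k n (iter k m t).
Proof. induction n; simpl; congruence. Qed.

Lemma iter_Sr k n t : iter k (S n) t = iter k n (k t).
Proof. induction n; simpl; auto. simpl in IHn. rewrite IHn. auto. Qed.

Lemma iter_I k n t : MapsI k -> inI t -> inI (iter k n t).
Proof. intros I Ht; induction n; simpl; auto. Qed.

Lemma iter_mono k n s t : Mono k -> MapsI k -> inI s -> inI t -> s < t -> iter k n s < iter k n t.
Proof. intros M I Hs Ht H; induction n; simpl; auto. apply M; auto; apply iter_I; auto. Qed.

Lemma iter_mono_le k n s t : Mono k -> MapsI k -> inI s -> inI t -> s <= t -> iter k n s <= iter k n t.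
Proof. intros M I Hs Ht H. destruct (Req_dec s t) as [->|]; [lra|]. left; apply iter_mono; auto; lra. Qed.

Lemma iter_inj k n s t : Mono k -> MapsI k -> inI s -> inI t -> iter k n s = iter k n t -> s = t.
Proof.
  intros M I Hs Ht H. destruct (total_order_T s t) as [[h|h]|h]; auto.
  - pose proof (iter_mono k n s t M I Hs Ht h); lra.
  - pose proof (iter_mono k n t s M I Ht Hs h); lra.
Qed.

Lemma iter_comm (P : R -> Prop) k g n t : (forall y, P y -> P (k y)) ->
  (forall y, P y -> g (k y) = k (g y)) -> P t ->
  g (iter k n t) = iter k n (g t) /\ P (iter k n t).
Proof.
  intros Pk C Pt. induction n as [|n [IH1 IH2]]; simpl; auto.
  split; auto. rewrite C; auto. congruence.
Qed.

Lemma iter_inv k ki m y : Bij k ki -> inI y -> iter k m (iter ki m y) = y.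
Proof.
  intros B Hy. pose proof B as (Mk&Mki&Ik&Iki&Inv). revert y Hy.
  induction m; intros y Hy; [simpl; auto|].
  assert (E: k (ki (iter ki m y)) = iter ki m y) by (apply Inv; apply iter_I; auto).
  rewrite iter_Sr. change (iter ki (S m) y) with (ki (iter ki m y)). rewrite E. auto.
Qed.

Lemma SeqSup (u : nat -> R) B : (forall n, u n < u (S n)) -> (forall n, u n <= B) ->
  exists L, (forall n, u n < L) /\ L <= B /\ forall eps, 0 < eps -> exists n, L - eps < u n.
Proof.
  intros Hinc HB.
  destruct (completeness (fun y => exists n, y = u n)) as [L [Hub Hlub]].
  - exists B. intros y [n ->]. auto.
  - exists (u O), O. auto.
  - exists L. split; [|split].
    + intros n. apply Rlt_le_trans with (u (S n)); auto. apply Hub. eauto.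
    + apply Hlub. intros y [n ->]. auto.
    + intros eps Heps. apply NNPP. intro N.
      assert (L <= L - eps); [|lra].
      apply Hlub. intros y [n ->]. apply Rnot_lt_le. intro h. apply N. eauto.
Qed.

Lemma SeqInf (u : nat -> R) B : (forall n, u (S n) < u n) -> (forall n, B <= u n) ->
  exists L, (forall n, L < u n) /\ B <= L /\ forall eps, 0 < eps -> exists n, u n < L + eps.
Proof.
  intros Hd HB. destruct (SeqSup (fun n => - u n) (- B)) as [L [H1 [H2 H3]]].
  - intros n. specialize (Hd n). lra.
  - intros n. specialize (HB n). lra.
  - exists (- L). split; [|split].
    + intros n; specialize (H1 n); lra.
    + lra.
    + intros eps He. destruct (H3 eps He) as [n Hn]. exists n. lra.
Qed.

Lemma iter_Comp k ki e n t : Bij k ki -> Comp k e t -> Comp k e (iter k n t).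
Proof. intros B C; induction n; simpl; auto. apply (Comp_k k ki); auto. Qed.

Lemma iter_Comp_i k ki e n t : Bij k ki -> Comp k e t -> Comp k e (iter ki n t).
Proof. intros B C; induction n; simpl; auto. apply (Comp_ki k ki); auto. Qed.

Lemma P_right k ki e : Bij k ki -> inI e -> e < k e ->
  exists L, e < L /\ L <= 1 /\ k L = L /\
   (forall t, Comp k e t -> t < L) /\
   (forall t, e <= t < L -> Comp k e t) /\
   (forall t d, Comp k e t -> 0 < d -> exists n, L - d < iter k n t).
Proof.
  intros B Ie He. pose proof B as (Mk&Mki&Ik&Iki&Inv).
  assert (Ce : Comp k e e) by (apply Comp_self; split; auto; lra).
  set (w := fun n => iter k n e).
  assert (wI : forall n, inI (w n)) by (intro n; apply iter_I; auto).
  assert (winc : forall n, w n < w (S n)).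
  { induction n; unfold w in *; simpl in *; auto; try (apply Mk; auto; apply iter_I; auto). }
  assert (wC : forall n, Comp k e (w n)) by (intro n; apply (iter_Comp k ki); auto).
  destruct (SeqSup w 1 winc (fun n => proj2 (wI n))) as [L [HL1 [HL2 HL3]]].
  assert (eL : e < L) by (apply (HL1 O)).
  assert (IL : inI L) by (unfold inI in *; lra).
  assert (kL : k L = L).
  { destruct (total_order_T (k L) L) as [[h|h]|h]; auto; exfalso.
    - destruct (HL3 (L - k L) ltac:(lra)) as [n Hn].
      assert (k (w n) < k L) by (apply Mk; auto). pose proof (winc n). unfold w in *; simpl in *; lra.
    - assert (ki L < L). { rewrite <- (proj1 (Inv L IL)) at 2. apply Mki; auto. }
      destruct (HL3 (L - ki L) ltac:(lra)) as [n Hn].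
      assert (k (ki L) < k (w n)) by (apply Mk; auto; lra).
      rewrite (proj2 (Inv L IL)) in H0. pose proof (HL1 (S n)). unfold w in *; simpl in *; lra. }
  assert (CL : forall t, Comp k e t -> t < L).
  { intros t C. apply Rnot_le_lt. intro h.
    destruct (C L ltac:(lra)) as [_ N]. auto. }
  exists L. split; [auto|split; [auto|split; [auto|split; [auto|split]]]].
  - intros t Ht. destruct (HL3 (L - t) ltac:(lra)) as [n Hn].
    apply (Comp_between k e (w n)); auto. lra.
  - intros t d C Hd.
    destruct (HL3 d Hd) as [N HN].
    assert (It : inI t) by (apply (Comp_I k e); auto).
    assert (Hm : exists m, e <= iter k m t).
    { destruct (Rle_dec e t) as [h|h]. { exists O. simpl. auto. }
      set (v := fun n => iter ki n e).
      assert (vI : forall n, inI (v n)) by (intro n; apply iter_I; auto).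
      assert (kie : ki e < e). { rewrite <- (proj1 (Inv e Ie)) at 2. apply Mki; auto. }
      assert (vdec : forall n, v (S n) < v n).
      { induction n; unfold v in *; simpl in *; auto; try (apply Mki; auto; apply iter_I; auto). }
      assert (vC : forall n, Comp k e (v n)) by (intro n; apply (iter_Comp_i k ki); auto).
      destruct (SeqInf v 0 vdec (fun n => proj1 (vI n))) as [L' [H1 [H2 H3]]].
      assert (IL' : inI L') by (pose proof (H1 O); pose proof (vI O); unfold inI in *; lra).
      assert (kiL : ki L' = L').
      { destruct (total_order_T (ki L') L') as [[h'|h']|h']; auto; exfalso.
        - assert (L' < k L'). { rewrite <- (proj2 (Inv L' IL')) at 1. apply Mk; auto. }
          destruct (H3 (k L' - L') ltac:(lra)) as [n Hn].
          assert (ki (v n) < ki (k L')) by (apply Mki; auto; lra).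
          rewrite (proj1 (Inv L' IL')) in H0. pose proof (H1 (S n)). unfold v in *; simpl in *; lra.
        - destruct (H3 (ki L' - L') ltac:(lra)) as [n Hn].
          assert (ki L' < ki (v n)) by (apply Mki; auto).
          pose proof (vdec n). unfold v in *; simpl in *; lra. }
      assert (kL' : k L' = L'). { rewrite <- kiL at 1. apply Inv; auto. }
      assert (tL' : L' < t).
      { apply Rnot_le_lt. intro h'. pose proof (H1 O) as X; unfold v in X; simpl in X.
        destruct (C L' ltac:(lra)) as [_ N']. auto. }
      destruct (H3 (t - L') ltac:(lra)) as [m Hm].
      exists m. rewrite <- (iter_inv k ki m e B Ie).
      apply iter_mono_le; auto; [apply iter_I; auto| unfold v in Hm; lra]. }
    destruct Hm as [m Hm].
    exists (N + m)%nat. rewrite iter_add.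
    assert (w N <= iter k N (iter k m t)).
    { apply iter_mono_le; auto. apply iter_I; auto. }
    lra.
Qed.

Lemma comm_inv k ki e u : Bij k ki -> MapsI u ->
  (forall y, Comp k e y -> u (k y) = k (u y)) -> forall y, Comp k e y -> u (ki y) = ki (u y).
Proof.
  intros B Iu C y Cy. pose proof B as (Mk&Mki&Ik&Iki&Inv).
  assert (Cy' : Comp k e (ki y)) by (apply (Comp_ki k ki); auto).
  pose proof (C _ Cy') as E.
  rewrite (proj2 (Inv y (Comp_I _ _ _ Cy))) in E. rewrite E.
  symmetry. apply Inv. apply Iu. apply (Comp_I k e); auto.
Qed.

Lemma Comp_iff k ki e t : Bij k ki -> (Comp k e t <-> Comp ki e t).
Proof. intros B; split; intro C. apply (Comp_inv k ki); auto. apply (Comp_inv ki k); auto. apply Bij_sym; auto. Qed.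

Lemma T_pos k ki g e : Bij k ki -> inI e -> e < k e -> LA g -> MapsI g ->
  (forall y, Comp k e y -> g (k y) = k (g y)) ->
  forall w, Comp k e w -> g w = w -> forall t, Comp k e t -> g t = t.
Proof.
  intros B Ie He Lg Ig Cg w Cw gw t Ct. pose proof B as (Mk&Mki&Ik&Iki&Inv).
  destruct (P_right k ki e B Ie He) as [L [eL [L1 [kL [CL [Cch Cit]]]]]].
  assert (IC : forall n y, Comp k e y -> g (iter k n y) = iter k n (g y) /\ Comp k e (iter k n y)).
  { intros n y Cy. apply iter_comm; auto. intros; apply (Comp_k k ki); auto. }
  destruct (Lg L ltac:(unfold inI in *; lra)) as [d [m [c [Hd Hg]]]].
  destruct (Cit w d Cw ltac:(lra)) as [n1 Hn1].
  destruct (IC n1 w Cw) as [E1 C1]. rewrite gw in E1.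
  set (p1 := iter k n1 w) in *. pose proof (CL _ C1) as p1L.
  destruct (Cit p1 (L - p1) C1 ltac:(lra)) as [n2 Hn2].
  destruct (IC n2 p1 C1) as [E2 C2]. rewrite E1 in E2.
  set (p2 := iter k n2 p1) in *. pose proof (CL _ C2) as p2L.
  rewrite Hg in E1 by lra. rewrite Hg in E2 by lra.
  assert (Hm : (m - 1) * (p2 - p1) = 0) by lra.
  apply Rmult_integral in Hm. destruct Hm as [Hm|Hm]; [|lra].
  assert (m = 1) by lra. assert (c = 0) by (subst m; lra). subst m c.
  destruct (Cit t d Ct ltac:(lra)) as [n Hn]. destruct (IC n t Ct) as [E C3].
  pose proof (CL _ C3). rewrite Hg in E by lra.
  assert (It : inI t) by (apply (Comp_I k e); auto).
  apply (iter_inj k n); auto. lra.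
Qed.

Lemma T2 k ki g e : Bij k ki -> inI e -> k e <> e -> LA g -> MapsI g ->
  (forall y, Comp k e y -> g (k y) = k (g y)) ->
  forall w, Comp k e w -> g w = w -> forall t, Comp k e t -> g t = t.
Proof.
  intros B Ie He Lg Ig Cg w Cw gw t Ct. pose proof B as (Mk&Mki&Ik&Iki&Inv).
  destruct (Rlt_or_le e (k e)) as [h|h].
  - apply (T_pos k ki g e B Ie h Lg Ig Cg w Cw gw t Ct).
  - assert (h' : e < ki e).
    { assert (k e < e) by lra. rewrite <- (proj1 (Inv e Ie)) at 1. apply Mki; auto. }
    apply (Comp_iff k ki) in Cw, Ct; auto.
    apply (T_pos ki k g e (Bij_sym _ _ B) Ie h' Lg Ig) with (w := w); auto.
    intros y Cy. apply (comm_inv k ki e); auto. apply (Comp_iff k ki); auto.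
Qed.

Lemma RightEnd k ki e : Bij k ki -> inI e -> k e <> e -> exists L, e < L /\ L <= 1 /\
  (forall t, Comp k e t -> t < L) /\ (forall t, e <= t < L -> Comp k e t) /\
  (forall u v d, MapsI u -> MapsI v -> (forall y, Comp k e y -> u (k y) = k (u y)) ->
     (forall y, Comp k e y -> v (k y) = k (v y)) -> 0 < d ->
     (forall t, L - d < t < L -> u t = v t) -> forall t, Comp k e t -> u t = v t).
Proof.
  intros B Ie He. pose proof B as (Mk&Mki&Ik&Iki&Inv).
  assert (gen : forall k ki, Bij k ki -> e < k e -> (forall t, Comp k e t <-> Comp k e t) -> exists L, e < L /\ L <= 1 /\
    (forall t, Comp k e t -> t < L) /\ (forall t, e <= t < L -> Comp k e t) /\
    (forall u v d, MapsI u -> MapsI v -> (forall y, Comp k e y -> u (k y) = k (u y)) ->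
     (forall y, Comp k e y -> v (k y) = k (v y)) -> 0 < d ->
     (forall t, L - d < t < L -> u t = v t) -> forall t, Comp k e t -> u t = v t)).
  { clear -Ie. intros k ki B He _. pose proof B as (Mk&Mki&Ik&Iki&Inv).
    destruct (P_right k ki e B Ie He) as [L [eL [L1 [kL [CL [Cch Cit]]]]]].
    exists L. split; [auto|split; [auto|split; [auto|split; [auto|]]]].
    intros u v d Iu Iv Cu Cv Hd E t Ct.
    destruct (Cit t d Ct Hd) as [n Hn].
    destruct (iter_comm (Comp k e) k u n t) as [Eu C1]; auto.
    { intros; apply (Comp_k k ki); auto. }
    destruct (iter_comm (Comp k e) k v n t) as [Ev _]; auto.
    { intros; apply (Comp_k k ki); auto. }
    pose proof (CL _ C1). rewrite E in Eu by lra. rewrite Eu in Ev.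
    apply (iter_inj k n); auto; try apply Iu; try apply Iv; apply (Comp_I k e); auto. }
  destruct (Rlt_or_le e (k e)) as [h|h].
  - apply (gen k ki); auto. tauto.
  - assert (h' : e < ki e).
    { assert (k e < e) by lra. rewrite <- (proj1 (Inv e Ie)) at 1. apply Mki; auto. }
    destruct (gen ki k (Bij_sym _ _ B) h' ltac:(tauto)) as [L [eL [L1 [CL [Cch Prp]]]]].
    exists L. split; [auto|split; [auto|split; [|split]]].
    + intros t Ct. apply CL. apply (Comp_iff k ki); auto.
    + intros t Ht. apply (Comp_iff k ki); auto.
    + intros u v d Iu Iv Cu Cv Hd E t Ct. apply (Prp u v d); auto.
      * intros y Cy. apply (comm_inv k ki e); auto. apply (Comp_iff k ki); auto.
      * intros y Cy. apply (comm_inv k ki e); auto. apply (Comp_iff k ki); auto.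
      * apply (Comp_iff k ki); auto.
Qed.

Definition G (f : R -> R) s d L := 0 < d <= L /\ 0 < s /\
  forall t, L - d <= t <= L -> f t = L + s * (t - L).

Lemma LA_G f L : Mono f -> LA f -> 0 < L <= 1 -> f L = L -> exists s d, G f s d L.
Proof.
  intros M Lf HL fL. destruct (Lf L HL) as [d [m [c [Hd E]]]].
  assert (A : f (L - d) < f L) by (apply M; unfold inI; lra).
  rewrite E in A by lra. rewrite (E L) in A, fL by lra.
  exists m, d. split; [lra|split; [nra|]].
  intros t Ht. rewrite E by lra. nra.
Qed.

Lemma G_comp f g s r d1 d2 L : G f s d1 L -> G g r d2 L ->
  G (fun t => g (f t)) (s * r) (Rmin d1 (d2 / s)) L.
Proof.
  intros [Hd1 [Hs E1]] [Hd2 [Hr E2]].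
  assert (A5 : 0 < d2 / s) by (apply Rdiv_lt_0_compat; lra).
  pose proof (Rmin_l d1 (d2/s)) as R1. pose proof (Rmin_r d1 (d2/s)) as R2.
  split; [split; [apply Rmin_glb_lt; lra|lra]|split; [nra|]].
  intros t Ht. rewrite E1 by lra.
  assert (A6 : s * (L - t) <= d2).
  { assert (A7 : L - t <= d2 / s) by lra.
    apply Rmult_le_compat_l with (r := s) in A7; [|lra].
    unfold Rdiv in A7. rewrite <- Rmult_assoc, (Rmult_comm s d2), Rmult_assoc, Rinv_r in A7; lra. }
  rewrite E2 by nra. ring.
Qed.

Lemma NoFix_sub k g e t : (forall w, Comp k e w -> g w <> w) -> Comp k e t -> Comp g e t.
Proof.
  intros N C z Hz. assert (Cz : Comp k e z) by (apply (Comp_between k e t); auto).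
  split; [apply (Comp_I k e z Cz)|apply N; auto].
Qed.

Lemma Conj_Comp f fi k e : Bij f fi -> MapsI k -> inI e -> f e = e -> forall z, inI z ->
  (Comp k e z <-> Comp (fun t => f (k (fi t))) e (f z)).
Proof.
  intros B Ik Ie fe z Iz. pose proof B as (Mf&Mfi&If&Ifi&Inv).
  assert (fie : fi e = e) by (rewrite <- fe at 1; apply Inv; auto).
  split; intros C y Hy.
  - assert (Iy : inI y) by (pose proof (If z Iz); unfold inI in *; lra).
    assert (Hy' : e <= fi y <= z \/ z <= fi y <= e).
    { rewrite <- fie. rewrite <- (proj1 (Inv z Iz)).
      destruct Hy as [[a b]|[a b]]; [left|right]; split; apply Mono_le; auto. }
    destruct (C _ Hy') as [_ N]. split; auto. intro E. apply N.
    apply (Mono_inj f); auto. rewrite E. symmetry; apply Inv; auto.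
  - assert (Iy : inI y) by (unfold inI in *; lra).
    assert (Hy' : e <= f y <= f z \/ f z <= f y <= e).
    { rewrite <- fe. destruct Hy as [[a b]|[a b]]; [left|right]; split; apply Mono_le; auto. }
    destruct (C _ Hy') as [_ N]. split; auto. intro E. apply N.
    rewrite (proj1 (Inv y Iy)). rewrite E. auto.
Qed.

Lemma core f0 g0 f1 g1 e x :
  Bij f0 g0 -> Bij f1 g1 -> LA f0 -> LA g0 -> LA f1 -> LA g1 ->
  (forall t, inI t -> g1 (f0 (f0 (f1 (g0 t)))) = f0 (f1 (g0 (g1 (f0 t))))) ->
  (forall t, inI t -> g1 (f0 (f0 (f0 (f1 (g0 (g0 t)))))) = f0 (f0 (f1 (g0 (g0 (g1 (f0 t))))))) ->
  inI e -> f0 e = e -> f1 e <> e -> Comp f1 e x -> f0 x <> x -> False.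
Proof.
  intros B0 B1 L0 Lg0 L1 Lg1 hk1 hk2 Ie f0e f1e Cx f0x.
  pose proof B0 as (M0&Mg0&I0&Ig0&Inv0).
  pose proof B1 as (M1&Mg1&I1&Ig1&Inv1).
  set (h := fun t => g1 (f0 t)). set (hi := fun t => g0 (f1 t)).
  set (k1 := fun t => f0 (f1 (g0 t))). set (k1i := fun t => f0 (g1 (g0 t))).
  set (k2 := fun t => f0 (k1 (g0 t))). set (k2i := fun t => f0 (k1i (g0 t))).
  assert (Bh : Bij h hi) by (apply (Bij_comp f0 g0 g1 f1 B0 (Bij_sym _ _ B1))).
  assert (B10 : Bij (fun t => f1 (g0 t)) (fun t => f0 (g1 t))) by (apply (Bij_comp g0 f0 f1 g1 (Bij_sym _ _ B0) B1)).
  assert (Bk1 : Bij k1 k1i) by (apply (Bij_comp _ _ f0 g0 B10 B0)).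
  assert (B11 : Bij (fun t => k1 (g0 t)) (fun t => f0 (k1i t))) by (apply (Bij_comp g0 f0 k1 k1i (Bij_sym _ _ B0) Bk1)).
  assert (Bk2 : Bij k2 k2i) by (apply (Bij_comp _ _ f0 g0 B11 B0)).
  pose proof Bh as (Mh&_&Ih&_&_). pose proof Bk1 as (Mk1&_&Ik1&_&Invk1).
  pose proof Bk2 as (Mk2&_&Ik2&_&_). pose proof B10 as (M10&_&I10&_&_).
  pose proof B11 as (M11&_&I11&_&_).
  assert (Lh : LA h) by (apply (LA_comp f0 g1 M0 I0 L0 Lg1)).
  assert (Lk1 : LA k1) by (apply (LA_comp (fun t => f1 (g0 t)) f0 M10 I10 (LA_comp g0 f1 Mg0 Ig0 Lg0 L1) L0)).
  assert (Lk2 : LA k2) by (apply (LA_comp (fun t => k1 (g0 t)) f0 M11 I11 (LA_comp g0 k1 Mg0 Ig0 Lg0 Lk1) L0)).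
  assert (Ch1 : forall t, inI t -> h (k1 t) = k1 (h t)) by exact hk1.
  assert (Ch2 : forall t, inI t -> h (k2 t) = k2 (h t)) by exact hk2.
  assert (g0e : g0 e = e) by (rewrite <- f0e at 1; apply Inv0; auto).
  assert (he : h e <> e).
  { unfold h. rewrite f0e. intro E. apply f1e. rewrite <- E at 1. apply Inv1; auto. }
  assert (k1e : k1 e <> e).
  { unfold k1. rewrite g0e. intro E. apply f1e. apply (Mono_inj f0); auto. congruence. }
  assert (k2e : k2 e <> e).
  { unfold k2. rewrite g0e. intro E. apply k1e. apply (Mono_inj f0); auto. congruence. }
  assert (S_h : Supp h e) by (split; auto).
  assert (S_k1 : Supp k1 e) by (split; auto).
  assert (S_k2 : Supp k2 e) by (split; auto).
  assert (D1H : forall t, Comp k1 e t -> Comp h e t).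
  { intros t0; apply NoFix_sub. intros w Cw hw. apply he.
    apply (T2 k1 k1i h e Bk1 Ie k1e Lh Ih) with (w := w); auto.
    - intros y Cy. apply Ch1. apply (Comp_I k1 e); auto.
    - apply Comp_self; auto. }
  assert (D2H : forall t, Comp k2 e t -> Comp h e t).
  { intros t0; apply NoFix_sub. intros w Cw hw. apply he.
    apply (T2 k2 k2i h e Bk2 Ie k2e Lh Ih) with (w := w); auto.
    - intros y Cy. apply Ch2. apply (Comp_I k2 e); auto.
    - apply Comp_self; auto. }
  assert (HD1 : forall t, Comp h e t -> Comp k1 e t).
  { intros t0; apply NoFix_sub. intros w Cw hw. apply k1e.
    apply (T2 h hi k1 e Bh Ie he Lk1 Ik1) with (w := w); auto.
    - intros y Cy. symmetry. apply Ch1. apply (Comp_I h e); auto.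
    - apply Comp_self; auto. }
  assert (HD2 : forall t, Comp h e t -> Comp k2 e t).
  { intros t0; apply NoFix_sub. intros w Cw hw. apply k2e.
    apply (T2 h hi k2 e Bh Ie he Lk2 Ik2) with (w := w); auto.
    - intros y Cy. symmetry. apply Ch2. apply (Comp_I h e); auto.
    - apply Comp_self; auto. }
  assert (CD1 : forall z, inI z -> (Comp f1 e z <-> Comp k1 e (f0 z))).
  { intros z Iz. apply (Conj_Comp f0 g0 f1 e B0 I1 Ie f0e z Iz). }
  assert (D12 : forall z, inI z -> (Comp k1 e z <-> Comp k2 e (f0 z))).
  { intros z Iz. apply (Conj_Comp f0 g0 k1 e B0 Ik1 Ie f0e z Iz). }
  assert (CeqD1 : forall z, inI z -> (Comp f1 e z <-> Comp k1 e z)).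
  { intros z Iz. rewrite (D12 z Iz), (CD1 z Iz). split; auto. }
  assert (CeqH : forall z, Comp f1 e z <-> Comp h e z).
  { intros z. split; intro C.
    - apply D1H. apply CeqD1; auto. apply (Comp_I f1 e); auto.
    - apply CeqD1; auto. apply (Comp_I h e); auto. }
  assert (Cf0 : forall z, Comp f1 e z -> Comp f1 e (f0 z)).
  { intros z C. assert (Iz : inI z) by (apply (Comp_I f1 e); auto).
    apply CD1; auto. apply HD1. apply D2H. apply D12; auto. apply CD1; auto. }
  assert (Cg0 : forall z, Comp f1 e z -> Comp f1 e (g0 z)).
  { intros z C. assert (Iz : inI z) by (apply (Comp_I f1 e); auto).
    apply CD1; auto. rewrite (proj2 (Inv0 z Iz)). apply CeqD1; auto. }
  destruct (RightEnd h hi e Bh Ie he) as [L [eL [LL1 [CL [Cch Prp]]]]].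
  assert (IL : inI L) by (unfold inI in *; lra).
  assert (CL' : forall t, e <= t < L -> Comp f1 e t) by (intros; apply CeqH; auto).
  assert (CL'' : forall t, Comp f1 e t -> t < L) by (intros; apply CL; apply CeqH; auto).
  assert (f1L : f1 L = L).
  { apply NNPP. intro N. assert (Comp f1 e L); [|pose proof (CL'' L H); lra].
    intros z Hz. destruct (Req_dec z L) as [->|nz]; [split; auto|].
    apply (Comp_Supp f1 e). apply CL'. lra. }
  assert (f0L : f0 L = L).
  { destruct (total_order_T (f0 L) L) as [[h1|h1]|h1]; auto; exfalso.
    - set (t := (Rmax e (f0 L) + L) / 2).
      pose proof (Rmax_l e (f0 L)). pose proof (Rmax_r e (f0 L)).
      assert (Ct : Comp f1 e t) by (apply CL'; unfold t; split; apply Rmax_case_strong; intros; lra).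
      assert (It : inI t) by (apply (Comp_I f1 e); auto).
      pose proof (CL'' _ (Cg0 t Ct)).
      assert (g0 (f0 L) < g0 t) by (apply Mg0; auto; unfold t; apply Rmax_case_strong; intros; lra).
      rewrite (proj1 (Inv0 L IL)) in H2. lra.
    - assert (g0 L < L).
      { rewrite <- (proj1 (Inv0 L IL)) at 2. apply Mg0; auto. }
      set (t := (Rmax e (g0 L) + L) / 2).
      pose proof (Rmax_l e (g0 L)). pose proof (Rmax_r e (g0 L)).
      assert (Ct : Comp f1 e t) by (apply CL'; unfold t; split; apply Rmax_case_strong; intros; lra).
      assert (It : inI t) by (apply (Comp_I f1 e); auto).
      pose proof (CL'' _ (Cf0 t Ct)).
      assert (f0 (g0 L) < f0 t) by (apply M0; auto; unfold t; apply Rmax_case_strong; intros; lra).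
      rewrite (proj2 (Inv0 L IL)) in H3. lra. }
  assert (g0L : g0 L = L) by (rewrite <- f0L at 1; apply Inv0; auto).
  assert (HL : 0 < L <= 1) by (unfold inI in *; lra).
  destruct (LA_G f0 L M0 L0 HL f0L) as [s0 [d0 G0]].
  destruct (LA_G f1 L M1 L1 HL f1L) as [s1 [d1 G1]].
  destruct (LA_G g0 L Mg0 Lg0 HL g0L) as [sg [dg Gg]].
  pose proof (G_comp _ _ _ _ _ _ _ Gg G0) as Gid.
  assert (Hs : sg * s0 = 1).
  { destruct Gid as [Hd [_ E]]. set (d := Rmin dg (d0 / sg)) in *.
    assert (Id : inI (L - d)) by (unfold inI in *; lra).
    pose proof (E (L - d) ltac:(lra)) as E'. rewrite (proj2 (Inv0 _ Id)) in E'.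
    assert ((sg * s0 - 1) * d = 0) by lra. apply Rmult_integral in H. destruct H; lra. }
  pose proof (G_comp _ _ _ _ _ _ _ (G_comp _ _ _ _ _ _ _ Gg G1) G0) as Gk1.
  pose proof (G_comp _ _ _ _ _ _ _ (G_comp _ _ _ _ _ _ _ (G_comp _ _ _ _ _ _ _
              (G_comp _ _ _ _ _ _ _ Gg Gg) G1) G0) G0) as Gk2.
  destruct Gk1 as [Hd1 [_ E1]]. destruct Gk2 as [Hd2 [_ E2]].
  set (dd1 := Rmin (Rmin dg (d1 / sg)) (d0 / (sg * s1))) in *.
  set (dd2 := Rmin (Rmin (Rmin (Rmin dg (dg / sg)) (d1 / (sg * sg))) (d0 / (sg * sg * s1)))
             (d0 / (sg * sg * s1 * s0))) in *.
  assert (Ek : forall y, Comp h e y -> k1 y = k2 y).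
  { apply (Prp k1 k2 (Rmin dd1 dd2)); auto.
    - intros y Cy. symmetry. apply Ch1. apply (Comp_I h e); auto.
    - intros y Cy. symmetry. apply Ch2. apply (Comp_I h e); auto.
    - apply Rmin_glb_lt; lra.
    - intros t Ht. pose proof (Rmin_l dd1 dd2). pose proof (Rmin_r dd1 dd2).
      unfold k2, k1. rewrite (E1 t) by lra. rewrite (E2 t) by lra.
      replace (sg * sg * s1 * s0 * s0) with ((sg * s0) * (sg * s0) * s1) by ring.
      replace (sg * s1 * s0) with ((sg * s0) * s1) by ring. rewrite Hs. ring. }
  assert (Cg : forall y, Comp k1 e y -> g0 (k1 y) = k1 (g0 y)).
  { intros y Cy. assert (Iy : inI y) by (apply (Comp_I k1 e); auto).
    rewrite (Ek y (D1H y Cy)). unfold k2. apply Inv0. apply Ik1. auto. }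
  assert (Cx1 : Comp k1 e x) by (apply CeqD1; auto; apply (Comp_I f1 e); auto).
  pose proof (T2 k1 k1i g0 e Bk1 Ie k1e Lg0 Ig0 Cg e (Comp_self _ _ S_k1) g0e x Cx1) as gx.
  apply f0x. rewrite <- gx at 1. apply Inv0. apply (Comp_I f1 e); auto.
Qed.

Lemma CommFromId a ai b bi : Bij a ai -> Bij b bi ->
  (forall t, inI t -> bi (ai (b (a t))) = t) -> forall t, inI t -> b (a t) = a (b t).
Proof.
  intros (Ma&Mai&Ia&Iai&Inva) (Mb&Mbi&Ib&Ibi&Invb) H t It.
  pose proof (H t It) as E.
  assert (Iy : inI (ai (b (a t)))) by auto.
  assert (E2 : b (bi (ai (b (a t)))) = b t) by congruence.
  rewrite (proj2 (Invb _ Iy)) in E2. rewrite <- E2. symmetry. apply Inva. auto.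
Qed.

Lemma comp_orbital f e : Supp f e -> orbital f (Comp f e).
Proof.
  intros S. split; [|split; [|split]].
  - exists e. apply Comp_self; auto.
  - intros y C. apply (Comp_Supp f e y C).
  - intros a b z Ca Cb Hz w Hw.
    destruct (Rle_dec w e).
    + apply Ca. lra.
    + apply Cb. lra.
  - intros B IB SB [b0 [Bb0 Cb0]] y By w Hw.
    destruct (classic (e <= w <= b0 \/ b0 <= w <= e)) as [h|h]; [apply Cb0; auto|].
    apply SB. destruct (Rle_dec b0 y).
    + apply (IB b0 y); auto. lra.
    + apply (IB y b0); auto. lra.
Qed.

Lemma find_fix f A x y : orbital f A -> A x -> inI y -> ~ A y ->
  exists z, (x <= z <= y \/ y <= z <= x) /\ inI z /\ f z = z.
Proof.
  intros (_&SA&_&Max) Ax Iy Ny. apply NNPP. intro N. apply Ny.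
  assert (Ix : inI x) by (apply SA; auto).
  apply (Max (fun z => x <= z <= y \/ y <= z <= x)).
  - intros a b z Ha Hb Hz. lra.
  - intros z Hz. assert (Iz : inI z) by (unfold inI in *; lra). split; auto.
    intro E. apply N. exists z. auto.
  - exists x. split; auto. lra.
  - lra.
Qed.

Theorem lemma2p4 (f0 f1 g0 g1 : R -> R) :
  PL0 f0 -> PL0 f1 -> is_inv f0 g0 -> is_inv f1 g1 ->
  (* [f1^{f0}, f0 f1^{-1}] = 1 *)
  is_id (comm (conjg f1 f0 g0) (conjg g1 f0 g0) (mul f0 g1) (mul f1 g0)) ->
  (* [f0 f1^{-1}, f1^{f0^2}] = 1 *)
  is_id (comm (mul f0 g1) (mul f1 g0)
              (conjg f1 (mul f0 f0) (mul g0 g0))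
              (conjg g1 (mul f0 f0) (mul g0 g0))) ->
  forall A : R -> Prop, orbital f0 A ->
    (exists B : R -> Prop, orbital f1 B /\ forall x, B x -> A x) \/
    (forall x, A x -> ~ Supp f1 x).
Proof.
  intros P0 P1 Iv0 Iv1 H1 H2 A OA.
  pose proof (PL0_Bij f0 g0 P0 Iv0) as B0.
  pose proof (PL0_Bij f1 g1 P1 Iv1) as B1.
  pose proof (PL0_LA f0 P0) as L0. pose proof (PL0_LA f1 P1) as L1.
  pose proof (PL0_LA g0 (proj1 Iv0)) as Lg0. pose proof (PL0_LA g1 (proj1 Iv1)) as Lg1.
  pose proof B0 as (M0&Mg0&I0&Ig0&Inv0).
  pose proof B1 as (M1&Mg1&I1&Ig1&Inv1).
  set (h := fun t => g1 (f0 t)). set (hi := fun t => g0 (f1 t)).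
  set (k1 := fun t => f0 (f1 (g0 t))). set (k1i := fun t => f0 (g1 (g0 t))).
  set (k2 := fun t => f0 (k1 (g0 t))). set (k2i := fun t => f0 (k1i (g0 t))).
  assert (Bh : Bij h hi) by (apply (Bij_comp f0 g0 g1 f1 B0 (Bij_sym _ _ B1))).
  assert (B10 : Bij (fun t => f1 (g0 t)) (fun t => f0 (g1 t))) by (apply (Bij_comp g0 f0 f1 g1 (Bij_sym _ _ B0) B1)).
  assert (Bk1 : Bij k1 k1i) by (apply (Bij_comp _ _ f0 g0 B10 B0)).
  assert (B11 : Bij (fun t => k1 (g0 t)) (fun t => f0 (k1i t))) by (apply (Bij_comp g0 f0 k1 k1i (Bij_sym _ _ B0) Bk1)).
  assert (Bk2 : Bij k2 k2i) by (apply (Bij_comp _ _ f0 g0 B11 B0)).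
  assert (hk1 : forall t, inI t -> h (k1 t) = k1 (h t)).
  { apply (CommFromId k1 k1i h hi Bk1 Bh). exact H1. }
  assert (hk2 : forall t, inI t -> h (k2 t) = k2 (h t)).
  { intros t It. symmetry. apply (CommFromId h hi k2 k2i Bh Bk2 H2); auto. }
  destruct (classic (exists x, A x /\ Supp f1 x)) as [[x [Ax Sx]] | No].
  - destruct (classic (forall y, Comp f1 x y -> A y)) as [Hin|Hout].
    + left. exists (Comp f1 x). split; auto. apply comp_orbital; auto.
    + exfalso. apply not_all_ex_not in Hout. destruct Hout as [y Hy].
      apply imply_to_and in Hy. destruct Hy as [Cy Ny].
      destruct (find_fix f0 A x y OA Ax (Comp_I f1 x y Cy) Ny) as [z [Hz [Iz fz]]].
      assert (Cz : Comp f1 x z) by (apply (Comp_between f1 x y); auto).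
      apply (core f0 g0 f1 g1 z x B0 B1 L0 Lg0 L1 Lg1 hk1 hk2 Iz fz).
      * apply (Comp_Supp f1 x z Cz).
      * apply Comp_sym; auto.
      * destruct OA as (_&SA&_). apply SA; auto.
  - right. intros x Ax Sx. apply No. eauto.
Qed.
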